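(* The universal unital C*-algebra generated by the entries $p_{ij}$ ($i=1,2$, $j=1,2,3,4$) of a $2\times4$ magic isometry is isomorphic to $C^\ast(Q_3)$ via $p_{11}\mapsto p_{000}$, $p_{12}\mapsto p_{011}$, $p_{13}\mapsto p_{110}$, $p_{14}\mapsto p_{101}$, $p_{21}\mapsto p_{111}$, $p_{22}\mapsto p_{100}$, $p_{23}\mapsto p_{001}$, $p_{24}\mapsto p_{010}$.
   Context: A $2\times 4$ magic isometry in a unital C*-algebra is a matrix $(P_{ij})_{i\le2,j\le4}$ of projections such that each row $(P_{ij})_{j=1}^4$ sums to $1$ and, for each $j$, $P_{1j}P_{2j}=0$. The cube $Q_3$ is the bipartite graph on the eight binary strings of length $3$, with classes $U_3=\{000,011,101,110\}$ (even number of $1$'s) and $V_3=\{001,010,100,111\}$, two strings adjacent iff they differ in exactly one digit. $C^\ast(Q_3)$ is the universal unital C*-algebra generated by projections $p_x$ ($x$ a binary string of length $3$) with $\sum_{u\in U_3}p_u=1=\sum_{v\in V_3}p_v$ and $p_up_v=0$ whenever $u\in U_3$, $v\in V_3$ are not adjacent. *)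

(* Defs.v *)
From HB Require Import structures.
From mathcomp Require Import all_boot all_order all_algebra.
From mathcomp Require Import reals.
From mathcomp Require Import complex.
Set Implicit Arguments.
Unset Strict Implicit.
Unset Printing Implicit Defensive.
Import Order.TTheory GRing.Theory Num.Theory.
Local Open Scope ring_scope.

Record cstar (R : realType) := CStar {
  cs_T :> algType R[i];
  cs_star : cs_T -> cs_T;
  cs_norm : cs_T -> R;
  cs_starK : forall x, cs_star (cs_star x) = x;
  cs_starD : forall x y, cs_star (x + y) = cs_star x + cs_star y;
  cs_starZ : forall (a : R[i]) x, cs_star (a *: x) = a^* *: cs_star x;
  cs_starM : forall x y, cs_star (x * y) = cs_star y * cs_star x;
  cs_norm_eq0 : forall x, cs_norm x = 0 -> x = 0;
  cs_normD : forall x y, cs_norm (x + y) <= cs_norm x + cs_norm y;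
  cs_normZ : forall (a : R[i]) x, cs_norm (a *: x) = @Normc.normc R a * cs_norm x;
  cs_normM : forall x y, cs_norm (x * y) <= cs_norm x * cs_norm y;
  cs_cstar_id : forall x, cs_norm (cs_star x * x) = cs_norm x ^+ 2;
  cs_complete : forall u : nat -> cs_T,
    (forall e : R, 0 < e -> exists N : nat, forall m n : nat,
        (N <= m)%N -> (N <= n)%N -> cs_norm (u m - u n) < e) ->
    exists l : cs_T, forall e : R, 0 < e -> exists N : nat, forall n : nat,
        (N <= n)%N -> cs_norm (u n - l) < e
}.

Definition star_hom (R : realType) (A B : cstar R) (f : A -> B) : Prop :=
  [/\ forall (a : R[i]) x y, f (a *: x + y) = a *: f x + f y,
      f 1 = 1,
      forall x y, f (x * y) = f x * f y &
      forall x, f (cs_star x) = cs_star (f x)].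

Definition is_proj (R : realType) (A : cstar R) (p : A) : Prop :=
  p * p = p /\ cs_star p = p.

Definition universal (R : realType) (I : Type)
    (rel : forall B : cstar R, (I -> B) -> Prop) (A : cstar R) (g : I -> A) : Prop :=
  rel A g /\
  forall (B : cstar R) (f : I -> B), rel B f ->
    exists! phi : A -> B, star_hom phi /\ forall i, phi (g i) = f i.

(* 2 x 4 magic isometry; rows i : 'I_2, columns j : 'I_4 (0-based) *)
Definition magic_iso_rel (R : realType) (B : cstar R) (P : 'I_2 * 'I_4 -> B) : Prop :=
  [/\ forall i j, is_proj (P (i, j)),
      forall i : 'I_2, \sum_(j < 4) P (i, j) = 1 &
      forall j : 'I_4, P (0, j) * P (1, j) = 0].

(* The cube Q_3 : binary strings of length 3 *)
Definition bits := (bool * bool * bool)%type.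
Definition bs (a b c : bool) : bits := (a, b, c).
Definition nones (x : bits) : nat := let: (a, b, c) := x in (a + b + c)%N.
Definition U3 (x : bits) : bool := ~~ odd (nones x).
Definition V3 (x : bits) : bool := odd (nones x).
Definition hamming (x y : bits) : nat :=
  let: (a, b, c) := x in let: (a', b', c') := y in
  ((a != a') + (b != b') + (c != c'))%N.
Definition adjacent (x y : bits) : bool := hamming x y == 1%N.

Definition cube_rel (R : realType) (B : cstar R) (p : bits -> B) : Prop :=
  [/\ forall x, is_proj (p x),
      \sum_(u | U3 u) p u = 1,
      \sum_(v | V3 v) p v = 1 &
      forall u v, U3 u -> V3 v -> ~~ adjacent u v -> p u * p v = 0].

(* The assignment p_ij |-> p_x of the statement (indices 0-based). *)
Definition sigma (ij : 'I_2 * 'I_4) : bits :=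
  match nat_of_ord ij.1, nat_of_ord ij.2 with
  | 0, 0 => bs false false false
  | 0, 1 => bs false true true
  | 0, 2 => bs true true false
  | 0, _ => bs true false true
  | _, 0 => bs true true true
  | _, 1 => bs true false false
  | _, 2 => bs false false true
  | _, _ => bs false true false
  end.

(* Main.v *)
Require Import Defs.
From HB Require Import structures.
From mathcomp Require Import all_boot all_order all_algebra.
From mathcomp Require Import reals complex.
Set Implicit Arguments.
Unset Strict Implicit.
Unset Printing Implicit Defensive.
Import GRing.Theory.
Local Open Scope ring_scope.

Lemma sum_bits (V : nmodType) (G : bits -> V) :
  \sum_u G u = \sum_a \sum_b \sum_c G (a, b, c).
Proof.
rewrite (eq_bigr (fun u => G (u.1, u.2))); last by case.
rewrite -(pair_bigA _ (fun x c => G (x, c))).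
rewrite (eq_bigr (fun x => \sum_c G (x.1, x.2, c))); last by case.
by rewrite -(pair_bigA _ (fun a b => \sum_c G (a, b, c))).
Qed.

Lemma sumU (V : nmodType) (G : bits -> V) :
  \sum_(u | U3 u) G u = G (bs false false false) + G (bs false true true)
     + G (bs true true false) + G (bs true false true).
Proof.
rewrite big_mkcond sum_bits /= !big_bool /= !addr0 !add0r /bs.
by rewrite addrC !addrA (addrC (G (false,true,true))).
Qed.

Lemma sumV (V : nmodType) (G : bits -> V) :
  \sum_(u | V3 u) G u = G (bs true true true) + G (bs true false false)
     + G (bs false false true) + G (bs false true false).
Proof.
rewrite big_mkcond sum_bits /= !big_bool /= !addr0 !add0r /bs.
by rewrite (addrC (G (false,true,false))) addrA.
Qed.

Definition c0 : 'I_4 := @Ordinal 4 0 isT.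
Definition c1 : 'I_4 := @Ordinal 4 1 isT.
Definition c2 : 'I_4 := @Ordinal 4 2 isT.
Definition c3 : 'I_4 := @Ordinal 4 3 isT.

Lemma sum4 (V : nmodType) (F : 'I_4 -> V) :
  \sum_(j < 4) F j = F c0 + F c1 + F c2 + F c3.
Proof.
rewrite !big_ord_recl big_ord0 addr0 !addrA.
by congr (_ + _ + _ + _); congr F; apply/val_inj.
Qed.

Definition tau (x : bits) : 'I_2 * 'I_4 :=
  match x with
  | (false, false, false) => (0, c0)
  | (false, true, true) => (0, c1)
  | (true, true, false) => (0, c2)
  | (true, false, true) => (0, c3)
  | (true, true, true) => (1, c0)
  | (true, false, false) => (1, c1)
  | (false, false, true) => (1, c2)
  | (false, true, false) => (1, c3)
  end.

Lemma sigma_tau x : sigma (tau x) = x.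
Proof. by case: x => [[[] []] []]. Qed.

Lemma tau_sigma ij : tau (sigma ij) = ij.
Proof.
case: ij => [[[|[|//]] H1] [[|[|[|[|//]]]] H2]]; apply/eqP => //.
Qed.

Lemma star_hom_id (R : realType) (A : cstar R) : star_hom (fun x : A => x).
Proof. by split. Qed.

Lemma star_hom_comp (R : realType) (A B C : cstar R) (f : A -> B) (g : B -> C) :
  star_hom f -> star_hom g -> star_hom (fun x => g (f x)).
Proof.
case=> f1 f2 f3 f4 [g1 g2 g3 g4]; split.
- by move=> a x y; rewrite f1 g1.
- by rewrite f2 g2.
- by move=> x y; rewrite f3 g3.
- by move=> x; rewrite f4 g4.
Qed.

Theorem proposition7p2 (R : realType)
    (A : cstar R) (p : 'I_2 * 'I_4 -> A)
    (B : cstar R) (q : bits -> B) :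
  universal (@magic_iso_rel R) p ->
  universal (@cube_rel R) q ->
  exists phi : A -> B,
    [/\ star_hom phi, bijective phi & forall ij, phi (p ij) = q (sigma ij)].
Proof.
move=> [relA uA] [relB uB].
have relqs : magic_iso_rel (fun ij => q (sigma ij)).
  case: relB => Hp HU HV Hadj; split.
  - by move=> i j; exact: (Hp (sigma (i, j))).
  - move=> i; rewrite sum4; case: i => [[|[|//]] Hi].
      by rewrite -HU sumU.
    by rewrite -HV sumV.
  - move=> j; rewrite /=; case: j => [[|[|[|[|//]]]] Hj]; apply: Hadj => //.
have relpt : cube_rel (fun x => p (tau x)).
  case: relA => Hp Hrow Hcol; split.
  - by move=> x; case: (tau x) => i j; exact: Hp.
  - by rewrite sumU -(Hrow 0) sum4.
  - by rewrite sumV -(Hrow 1) sum4.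
  - move=> u v; case: u => [[[] []] []]; case: v => [[[] []] []] => //= _ _ _;
    apply: Hcol.
have [phi [[hphi phip] _]] := uB A (fun x => p (tau x)) relpt.
have [psi [[hpsi psiq] _]] := uA B (fun ij => q (sigma ij)) relqs.
exists psi; split => //.
exists phi.
- move=> x.
  have [u [_ uu]] := uA A p relA.
  have h1 := uu (fun x => x) (conj (star_hom_id A) (fun i => erefl)).
  have h2 := uu (fun x => phi (psi x)) (conj (star_hom_comp hpsi hphi)
     (fun i => etrans (congr1 phi (psiq i)) (etrans (phip _) (congr1 p (tau_sigma i))))).
  by rewrite -[RHS]/((fun x => x) x) -h1 h2.
- move=> y.
  have [u [_ uu]] := uB B q relB.
  have h1 := uu (fun x => x) (conj (star_hom_id B) (fun i => erefl)).
  have h2 := uu (fun x => psi (phi x)) (conj (star_hom_comp hphi hpsi)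
     (fun i => etrans (congr1 psi (phip i)) (etrans (psiq _) (congr1 q (sigma_tau i))))).
  by rewrite -[RHS]/((fun x => x) y) -h1 h2.
Qed.
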